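(* Let $f:[0,\infty)\to[0,\infty)$ be non-increasing with $f(0)=1$ and $f\in C^4([0,\infty))$, let $\mathcal L(\gamma)=\int_0^\infty e^{-\gamma x}f(x)dx$ and $\gamma_{\min}=\inf\{\gamma\in\mathbb R:\mathcal L(\gamma)<\infty\}$, and assume that for every $\gamma>\gamma_{\min}$ and $j=0,1,2,3,4$, $e^{-\gamma x}f^{(j)}(x)\in L^1([0,\infty))$ and $e^{-\gamma x}f^{(j)}(x)\to0$ as $x\to\infty$. For $s\ge1$ and $\rho=1-\gamma/\sqrt s$ define $F_s(\rho)=\sum_{n=0}^\infty f\bigl(\tfrac{n+1}{\sqrt s}\bigr)\rho^{n+1}$. Then for $\gamma_{\min}<\gamma\le\sqrt s$, $F_s(\rho)=\sqrt s\,\mathcal L(\gamma)+\mathcal M(\gamma)+O(1/\sqrt s)$, with $\mathcal M(\gamma)=\tfrac12\gamma^2\mathcal L'(\gamma)-\tfrac12$, where the $O(1/\sqrt s)$ holds uniformly in $\gamma$ in any compact subset of $(\gamma_{\min},\infty)$. Moreover, to leading order this $O(1/\sqrt s)$ term equals $\mathcal N(\gamma)/\sqrt s$, where $\mathcal N(\gamma)=\tfrac13\gamma^3\mathcal L'(\gamma)+\tfrac18\gamma^4\mathcal L''(\gamma)+\tfrac1{12}(\gamma-f'(0))$.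
   Context: $F_s(\rho)$ is the quantity $\sum_{n\ge0}p_s(0)\cdots p_s(n)\rho^{n+1}$ for an $s$-server system with admission control under the global control $p_s(0)\cdots p_s(n)=f((n+1)/\sqrt s)$. *)

(* Defs.v *)
From Stdlib Require Import Reals Lra.
From Coquelicot Require Export Coquelicot.
Open Scope R_scope.

Definition deriv_on_nonneg (g g' : R -> R) : Prop :=
  (forall x, 0 < x -> is_derive g x (g' x)) /\
  filterlim (fun h => (g h - g 0) / h) (at_right 0) (locally (g' 0)).

Definition cont_on_nonneg (g : R -> R) : Prop :=
  (forall x, 0 < x -> continuous g x) /\
  filterlim g (at_right 0) (locally (g 0)).

Definition Lap (f : R -> R) (g : R) : R :=
  RInt_gen (fun x => exp (- (g * x)) * f x) (at_point 0) (Rbar_locally p_infty).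

Definition gamma_min (f : R -> R) : Rbar :=
  Glb_Rbar (fun g => ex_RInt_gen (fun x => exp (- (g * x)) * f x)
                        (at_point 0) (Rbar_locally p_infty)).

Definition Fterm (f : R -> R) (s rho : R) (n : nat) : R :=
  f (INR (S n) / sqrt s) * rho ^ (S n).

Definition Mfun (f : R -> R) (g : R) : R :=
  / 2 * g ^ 2 * Derive (Lap f) g - / 2.

Definition Nfun (f : R -> R) (f'0 : R) (g : R) : R :=
  / 3 * g ^ 3 * Derive (Lap f) g + / 8 * g ^ 4 * Derive_n (Lap f) 2 g
  + / 12 * (g - f'0).

(* Main.v *)
Require Import Defs.
From Stdlib Require Import Reals Lra Lia Psatz.
From Coquelicot Require Import Coquelicot.
Open Scope R_scope.

Lemma exR_Ch2 (f : R -> R) a b c : a <= b <= c -> ex_RInt f a c -> ex_RInt f b c.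
Proof. intros H1 H2. apply (@ex_RInt_Chasles_2 R_CompleteNormedModule f a b c H1 H2). Qed.
Lemma exR_Ch1 (f : R -> R) a b c : a <= b <= c -> ex_RInt f a c -> ex_RInt f a b.
Proof. intros H1 H2. apply (@ex_RInt_Chasles_1 R_CompleteNormedModule f a b c H1 H2). Qed.
Lemma RInt_Ch (f : R -> R) a b c : ex_RInt f a b -> ex_RInt f b c ->
  RInt f a b + RInt f b c = RInt f a c.
Proof. intros H1 H2. apply (@RInt_Chasles R_CompleteNormedModule f a b c H1 H2). Qed.
Lemma exR_cont (f : R -> R) a b : (forall z, Rmin a b <= z <= Rmax a b -> continuous f z) ->
  ex_RInt f a b.
Proof. intros H. apply (@ex_RInt_continuous R_CompleteNormedModule f a b H). Qed.

Definition IR (u : R -> R) (l : R) : Prop :=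
  (forall b, 0 <= b -> ex_RInt u 0 b) /\
  filterlim (fun b => RInt u 0 b) (Rbar_locally p_infty) (locally l).

Lemma IR_gen u l : IR u l -> is_RInt_gen u (at_point 0) (Rbar_locally p_infty) l.
Proof.
  intros [Hex Hl] P HP.
  specialize (Hl P HP).
  destruct Hl as [M HM].
  exists (fun x => x = 0) (fun b => Rmax M 0 < b).
  - reflexivity.
  - exists (Rmax M 0). auto.
  - intros x y -> Hy. exists (RInt u 0 y). split.
    + apply (@RInt_correct R_CompleteNormedModule). apply Hex. generalize (Rmax_r M 0); lra.
    + apply HM. generalize (Rmax_l M 0); lra.
Qed.

Lemma IR_unique u l : IR u l -> RInt_gen u (at_point 0) (Rbar_locally p_infty) = l.
Proof.
  intro H. apply is_RInt_gen_unique. apply IR_gen; auto.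
Qed.

Lemma gen_IR u l : (forall b, 0 <= b -> ex_RInt u 0 b) ->
  is_RInt_gen u (at_point 0) (Rbar_locally p_infty) l -> IR u l.
Proof.
  intros Hex Hg. split; auto.
  intros P HP. specialize (Hg P HP).
  destruct Hg as [Q1 Q2 HQ1 HQ2 HQ].
  destruct HQ2 as [M HM]. exists (Rmax M 0). intros y Hy.
  destruct (HQ 0 y HQ1 (HM y (Rle_lt_trans _ _ _ (Rmax_l M 0) Hy))) as [z [Hz Pz]].
  simpl in *.
  replace (RInt u 0 y) with z; auto.
  symmetry. apply is_RInt_unique. auto.
Qed.

Lemma IR_ex_gen u : (forall b, 0 <= b -> ex_RInt u 0 b) ->
  ex_RInt_gen u (at_point 0) (Rbar_locally p_infty) ->
  IR u (RInt_gen u (at_point 0) (Rbar_locally p_infty)).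
Proof.
  intros Hex Hg. apply gen_IR; auto.
  apply (@RInt_gen_correct R_CompleteNormedModule); auto.
  apply Proper_StrongProper. apply at_point_filter.
  apply Proper_StrongProper. apply Rbar_locally_filter.
Qed.

Lemma IR_lim u l : IR u l -> forall eps : posreal, exists M, forall b, M <= b ->
  0 <= b /\ Rabs (RInt u 0 b - l) < eps.
Proof.
  intros [Hex Hl] eps.
  destruct (Hl (fun y => Rabs (y - l) < eps)) as [M HM].
  { exists eps. intros y Hy. exact Hy. }
  exists (Rmax M 0 + 1). intros b Hb.
  generalize (Rmax_l M 0) (Rmax_r M 0). intros. split. lra.
  apply HM. lra.
Qed.

Lemma lim_IR u l : (forall b, 0 <= b -> ex_RInt u 0 b) ->
  (forall eps : posreal, exists M, forall b, M <= b -> Rabs (RInt u 0 b - l) < eps) ->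
  IR u l.
Proof.
  intros Hex Hl. split; auto.
  intros P [eps HP].
  destruct (Hl eps) as [M HM]. exists M. intros b Hb. apply HP.
  apply HM. lra.
Qed.

Lemma IR_ext u v l : (forall x, 0 < x -> u x = v x) -> IR u l -> IR v l.
Proof.
  intros He [Hex Hl]. split.
  - intros b Hb. apply ex_RInt_ext with u; auto.
    intros x Hx. apply He. rewrite Rmin_left in Hx; lra.
  - eapply filterlim_ext_loc; [|exact Hl].
    exists 0. intros b Hb. apply RInt_ext. intros x Hx.
    apply He. rewrite Rmin_left in Hx; lra.
Qed.

Lemma IR_plus u v lu lv : IR u lu -> IR v lv -> IR (fun x => u x + v x) (lu + lv).
Proof.
  intros [Hu Hlu] [Hv Hlv]. split.
  - intros b Hb. apply (ex_RInt_plus u v); auto.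
  - eapply filterlim_ext_loc.
    2: { apply (filterlim_comp_2 _ _ Rplus Hlu Hlv).
         apply (filterlim_plus lu lv). }
    exists 0. intros b Hb. simpl. symmetry.
    apply (RInt_plus (V:=R_CompleteNormedModule) u v); [apply Hu|apply Hv]; lra.
Qed.

Lemma IR_scal k u lu : IR u lu -> IR (fun x => k * u x) (k * lu).
Proof.
  intros [Hu Hlu]. split.
  - intros b Hb. apply (ex_RInt_scal u); auto.
  - eapply filterlim_ext_loc.
    2: { eapply filterlim_comp; [exact Hlu|].
         apply (filterlim_scal_r (K:=R_AbsRing) (V:=R_NormedModule) k lu). }
    exists 0. intros b Hb. simpl. symmetry. apply (RInt_scal (V:=R_CompleteNormedModule) u).
    apply Hu; lra.
Qed.

Lemma IR_opp u lu : IR u lu -> IR (fun x => - u x) (- lu).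
Proof.
  intro H. apply (IR_ext (fun x => -1 * u x)). intros; ring.
  replace (- lu) with (-1 * lu) by ring. apply IR_scal; auto.
Qed.

Lemma IR_minus u v lu lv : IR u lu -> IR v lv -> IR (fun x => u x - v x) (lu - lv).
Proof.
  intros H1 H2. apply IR_plus; auto. apply IR_opp; auto.
Qed.

Lemma IR_le u v lu lv : IR u lu -> IR v lv -> (forall x, 0 <= x -> u x <= v x) -> lu <= lv.
Proof.
  intros Hu Hv Hle.
  destruct (Rle_lt_dec lu lv) as [H|H]; auto.
  assert (He : 0 < (lu - lv)/2) by lra.
  destruct (IR_lim u lu Hu (mkposreal _ He)) as [M1 HM1].
  destruct (IR_lim v lv Hv (mkposreal _ He)) as [M2 HM2].
  simpl in *.
  set (b := Rmax M1 M2).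
  destruct (HM1 b (Rmax_l _ _)) as [Hb H1].
  destruct (HM2 b (Rmax_r _ _)) as [_ H2].
  assert (RInt u 0 b <= RInt v 0 b).
  { apply RInt_le; auto. apply Hu; auto. apply Hv; auto. intros; apply Hle; lra. }
  apply Rabs_def2 in H1. apply Rabs_def2 in H2. lra.
Qed.

Lemma RInt_mono0 v b1 b2 : (forall x, 0 <= x -> 0 <= v x) ->
  (forall b, 0 <= b -> ex_RInt v 0 b) -> 0 <= b1 <= b2 -> RInt v 0 b1 <= RInt v 0 b2.
Proof.
  intros Hp Hex Hb.
  rewrite <- (RInt_Ch v 0 b1 b2).
  - assert (0 <= RInt v b1 b2).
    { apply RInt_ge_0. lra. apply exR_Ch2 with 0. lra. apply Hex; lra.
      intros; apply Hp; lra. }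
    lra.
  - apply Hex; lra.
  - apply exR_Ch2 with 0. lra. apply Hex; lra.
Qed.

Lemma IR_partial_le v lv : IR v lv -> (forall x, 0 <= x -> 0 <= v x) ->
  forall b, 0 <= b -> RInt v 0 b <= lv.
Proof.
  intros Hv Hp b Hb.
  destruct (Rle_lt_dec (RInt v 0 b) lv) as [H|H]; auto.
  assert (He : 0 < RInt v 0 b - lv) by lra.
  destruct (IR_lim v lv Hv (mkposreal _ He)) as [M HM]. simpl in *.
  destruct (HM (Rmax M b) (Rmax_l _ _)) as [_ H1].
  assert (RInt v 0 b <= RInt v 0 (Rmax M b)).
  { apply RInt_mono0; auto. apply Hv. generalize (Rmax_r M b); lra. }
  apply Rabs_def2 in H1. lra.
Qed.

Lemma IR_cmp u v lv : (forall x, continuous u x) ->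
  (forall x, 0 <= x -> Rabs (u x) <= v x) -> IR v lv ->
  exists lu, IR u lu /\ Rabs lu <= lv.
Proof.
  intros Hc Hle Hv.
  assert (Hex : forall a b, ex_RInt u a b).
  { intros a b. apply exR_cont. intros; apply Hc. }
  assert (Hexa : forall a b, ex_RInt (fun x => Rabs (u x)) a b).
  { intros a b. apply exR_cont. intros z _.
    apply (continuous_comp u Rabs). apply Hc. apply continuous_Rabs. }
  assert (Hexv : forall a b, 0 <= a <= b -> ex_RInt v a b).
  { intros a b Hab. apply exR_Ch2 with 0. lra. apply Hv. lra. }
  assert (Hcauchy : exists y, filterlim (fun b => RInt u 0 b) (Rbar_locally p_infty) (locally y)).
  { apply (filterlim_locally_cauchy (U := R_CompleteSpace) (F := Rbar_locally p_infty)).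
    intros eps.
    assert (He2 : 0 < eps / 2) by (destruct eps; simpl; lra).
    destruct (IR_lim v lv Hv (mkposreal _ He2)) as [M HM]. simpl in HM.
    exists (fun b => M <= b). split.
    { exists M. intros; lra. }
    assert (Key : forall b1 b2, M <= b1 -> b1 <= b2 ->
               Rabs (RInt u 0 b2 - RInt u 0 b1) < eps).
    { intros b1 b2 H1 H2.
      destruct (HM b1 H1) as [Hb1 A1]. destruct (HM b2 (Rle_trans _ _ _ H1 H2)) as [Hb2 A2].
      rewrite <- (RInt_Ch u 0 b1 b2); auto.
      replace (RInt u 0 b1 + RInt u b1 b2 - RInt u 0 b1) with (RInt u b1 b2) by lra.
      eapply Rle_lt_trans. apply abs_RInt_le; auto.
      eapply Rle_lt_trans. apply RInt_le with (g := v);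
        [lra| apply Hexa | apply Hexv; lra | intros x Hx; apply Hle; lra].
      rewrite <- (RInt_Ch v 0 b1 b2) in A2.
      apply Rabs_def2 in A1. apply Rabs_def2 in A2. lra.
      apply Hv; lra. apply Hexv; lra. }
    intros b1 b2 H1 H2. change (Rabs (RInt u 0 b2 - RInt u 0 b1) < eps).
    destruct (Rle_lt_dec b1 b2).
    - apply Key; auto.
    - rewrite Rabs_minus_sym. apply Key; auto; lra. }
  destruct Hcauchy as [y Hy].
  exists y. assert (HIu : IR u y) by (split; auto).
  split; auto.
  apply Rabs_le. split.
  - apply IR_opp in Hv. replace (- lv) with (- lv) by ring.
    apply (IR_le _ _ _ _ Hv HIu). intros x Hx. specialize (Hle x Hx).
    apply Rabs_le_between in Hle. lra.
  - apply (IR_le _ _ _ _ HIu Hv). intros x Hx. specialize (Hle x Hx).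
    apply Rabs_le_between in Hle. lra.
Qed.

Lemma glue_derive (A B : R -> R) l :
  A 0 = B 0 ->
  filterlim (fun h => (A h - A 0) / h) (at_right 0) (locally l) ->
  is_derive B 0 l ->
  is_derive (fun x => if Rle_dec 0 x then A x else B x) 0 l.
Proof.
  intros H0 HA HB.
  apply is_derive_Reals. apply is_derive_Reals in HB.
  intros eps Heps.
  destruct (HB eps Heps) as [d2 Hd2].
  destruct (HA (fun y => Rabs (y - l) < eps)) as [d1 Hd1].
  { exists (mkposreal eps Heps). intros y Hy. exact Hy. }
  assert (Hd : 0 < Rmin d1 d2) by (apply Rmin_pos; [destruct d1|destruct d2]; simpl; auto).
  exists (mkposreal _ Hd). intros h Hh0 Hh. simpl in Hh.
  rewrite Rplus_0_l.
  destruct (Rle_dec 0 0) as [_|C]; [|lra].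
  destruct (Rle_dec 0 h) as [Hp|Hn].
  - assert (0 < h) by (destruct Hp; auto; congruence).
    apply (Hd1 h).
    + unfold ball; simpl; unfold AbsRing_ball, abs, minus, plus, opp; simpl.
      replace (h + - 0) with h by ring.
      eapply Rlt_le_trans; [exact Hh|apply Rmin_l].
    + auto.
  - rewrite H0.
    specialize (Hd2 h Hh0 (Rlt_le_trans _ _ _ Hh (Rmin_r _ _))).
    rewrite Rplus_0_l in Hd2. exact Hd2.
Qed.

Definition Pp (fd : nat -> R -> R) (j : nat) (x : R) : R :=
  match j with
  | 0%nat => fd 0%nat 0 + fd 1%nat 0 * x + fd 2%nat 0 * x^2/2 + fd 3%nat 0 * x^3/6 + fd 4%nat 0 * x^4/24
  | 1%nat => fd 1%nat 0 + fd 2%nat 0 * x + fd 3%nat 0 * x^2/2 + fd 4%nat 0 * x^3/6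
  | 2%nat => fd 2%nat 0 + fd 3%nat 0 * x + fd 4%nat 0 * x^2/2
  | 3%nat => fd 3%nat 0 + fd 4%nat 0 * x
  | _ => fd 4%nat 0
  end.

Lemma Pp_0 fd j : (j <= 4)%nat -> Pp fd j 0 = fd j 0.
Proof.
  intros H. destruct j as [|[|[|[|[|j]]]]]; unfold Pp; try field; exfalso; lia.
Qed.

Lemma Pp_der fd j x : (j < 4)%nat -> is_derive (Pp fd j) x (Pp fd (S j) x).
Proof.
  intros H. destruct j as [|[|[|[|j]]]]; try (exfalso; lia); unfold Pp; auto_derive; auto. all: field.
Qed.

Definition Ee (fd : nat -> R -> R) (j : nat) (x : R) : R :=
  if Rle_dec 0 x then fd j x else Pp fd j x.

Lemma Ee_der fd j x : (j < 4)%nat -> deriv_on_nonneg (fd j) (fd (S j)) ->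
  is_derive (Ee fd j) x (Ee fd (S j) x).
Proof.
  intros Hj [Hpos H0].
  destruct (Rtotal_order x 0) as [Hn|[Hz|Hp]].
  - apply is_derive_ext_loc with (Pp fd j).
    + exists (mkposreal (-x) ltac:(lra)). intros y Hy.
      unfold ball in Hy; simpl in Hy; unfold AbsRing_ball, abs, minus, plus, opp in Hy; simpl in Hy.
      apply Rabs_def2 in Hy. unfold Ee. destruct (Rle_dec 0 y); auto; lra.
    + unfold Ee. destruct (Rle_dec 0 x); [lra|]. apply Pp_der; auto.
  - subst x. unfold Ee at 2. destruct (Rle_dec 0 0) as [_|C]; [|lra].
    apply glue_derive.
    + symmetry. apply Pp_0. lia.
    + exact H0.
    + rewrite <- Pp_0 by lia. apply Pp_der; auto.
  - apply is_derive_ext_loc with (fd j).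
    + exists (mkposreal x Hp). intros y Hy.
      unfold ball in Hy; simpl in Hy; unfold AbsRing_ball, abs, minus, plus, opp in Hy; simpl in Hy.
      apply Rabs_def2 in Hy. unfold Ee. destruct (Rle_dec 0 y); auto; lra.
    + unfold Ee. destruct (Rle_dec 0 x); [|lra]. apply Hpos; auto.
Qed.

Lemma Ee_cont fd j x : (j < 4)%nat -> deriv_on_nonneg (fd j) (fd (S j)) ->
  continuous (Ee fd j) x.
Proof.
  intros Hj Hd. apply (ex_derive_continuous (K:=R_AbsRing) (V:=R_NormedModule)). eexists. apply Ee_der; eauto.
Qed.

Lemma Ee_pos fd j x : 0 <= x -> Ee fd j x = fd j x.
Proof. intros H. unfold Ee. destruct (Rle_dec 0 x); auto; lra. Qed.

Definition HDer (fd : nat -> R -> R) := forall j, (j < 4)%nat -> deriv_on_nonneg (fd j) (fd (S j)).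

Definition phi0 fd b x := exp (-(b*x)) * Ee fd 0 x.
Definition phi1 fd b x := exp (-(b*x)) * (Ee fd 1 x - b * Ee fd 0 x).
Definition phi2 fd b x := exp (-(b*x)) * (Ee fd 2 x - 2*b * Ee fd 1 x + b^2 * Ee fd 0 x).
Definition phi3 fd b x := exp (-(b*x)) *
  (Ee fd 3 x - 3*b * Ee fd 2 x + 3*b^2 * Ee fd 1 x - b^3 * Ee fd 0 x).

Lemma DerE fd j x : HDer fd -> (j < 4)%nat -> Derive (fun y : R => Ee fd j y) x = Ee fd (S j) x.
Proof. intros HD Hj. apply is_derive_unique. apply Ee_der; auto. Qed.

Ltac dE HD j x := rewrite (DerE _ j x HD ltac:(lia)).

Lemma phi0_der fd b x : HDer fd -> is_derive (phi0 fd b) x (phi1 fd b x).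
Proof.
  intros HD. unfold phi0, phi1. auto_derive.
  - eexists. apply Ee_der; solve [lia|apply HD; lia].
  - dE HD 0%nat x. ring.
Qed.

Lemma phi1_der fd b x : HDer fd -> is_derive (phi1 fd b) x (phi2 fd b x).
Proof.
  intros HD. unfold phi1, phi2. auto_derive.
  - repeat split; eexists; apply Ee_der; solve [lia|apply HD; lia].
  - dE HD 0%nat x. dE HD 1%nat x. ring.
Qed.

Lemma phi2_der fd b x : HDer fd -> is_derive (phi2 fd b) x (phi3 fd b x).
Proof.
  intros HD. unfold phi2, phi3. auto_derive.
  - repeat split; eexists; apply Ee_der; solve [lia|apply HD; lia].
  - dE HD 0%nat x. dE HD 1%nat x. dE HD 2%nat x. ring.
Qed.

Lemma phi3_cont fd b x : HDer fd -> continuous (phi3 fd b) x.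
Proof.
  intros HD. apply (ex_derive_continuous (K:=R_AbsRing) (V:=R_NormedModule)).
  unfold phi3. auto_derive.
  repeat split; eexists; apply Ee_der; solve [lia|apply HD; lia].
Qed.

Lemma cont_of_der (p dp : R -> R) x : is_derive p x (dp x) -> continuous p x.
Proof.
  intros H. apply (ex_derive_continuous (K:=R_AbsRing) (V:=R_NormedModule)). eexists; eauto.
Qed.

Lemma DerU (p : R -> R) x l : is_derive p x l -> Derive (fun y : R => p y) x = l.
Proof. intros H. apply is_derive_unique. exact H. Qed.

Definition Kf h t := h * t^2 / 4 - t^3/6 - h^2 * t / 12.

Lemma EM1 (p0 p1 p2 p3 : R -> R) u h :
  (forall x, is_derive p0 x (p1 x)) -> (forall x, is_derive p1 x (p2 x)) ->
  (forall x, is_derive p2 x (p3 x)) -> (forall x, continuous p3 x) ->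
  RInt p0 u (u+h) = h/2*(p0 u + p0 (u+h)) - h^2/12*(p1 (u+h) - p1 u)
     + RInt (fun x => Kf h (x-u) * p3 x) u (u+h).
Proof.
  intros D0 D1 D2 C3.
  set (G := fun x => Kf h (x-u) * p2 x - (h*(x-u)/2 - (x-u)^2/2 - h^2/12) * p1 x
                    + (h/2 - (x-u)) * p0 x).
  assert (HG : is_RInt (fun x => Kf h (x-u) * p3 x - p0 x) u (u+h) (minus (G (u+h)) (G u))).
  { apply (is_RInt_derive (V:=R_CompleteNormedModule)).
    - intros x _. unfold G, Kf. auto_derive.
      + repeat split; eexists; eauto.
      + rewrite (DerU _ _ _ (D0 x)), (DerU _ _ _ (D1 x)), (DerU _ _ _ (D2 x)). field.
    - intros x _. apply (continuous_minus (K:=R_AbsRing) (V:=R_NormedModule)).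
      apply (continuous_mult (K:=R_AbsRing)).
      + apply (ex_derive_continuous (K:=R_AbsRing) (V:=R_NormedModule)). unfold Kf. auto_derive. auto.
      + auto.
      + eapply cont_of_der; eauto. }
  apply (is_RInt_unique (V:=R_CompleteNormedModule)) in HG.
  assert (Ex0 : ex_RInt p0 u (u+h)).
  { apply exR_cont. intros; eapply cont_of_der; eauto. }
  assert (Ex3 : ex_RInt (fun x => Kf h (x-u) * p3 x) u (u+h)).
  { apply exR_cont. intros z _. apply (continuous_mult (K:=R_AbsRing)); auto.
    apply (ex_derive_continuous (K:=R_AbsRing) (V:=R_NormedModule)). unfold Kf. auto_derive. auto. }
  assert (E : RInt (fun x => Kf h (x-u) * p3 x - p0 x) u (u+h) =
     RInt (fun x => Kf h (x-u) * p3 x) u (u+h) - RInt p0 u (u+h))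
    by exact (RInt_minus (V:=R_CompleteNormedModule) _ _ _ _ Ex3 Ex0).
  rewrite E in HG.
  unfold minus, plus, opp in HG. simpl in HG.
  unfold G in HG.
  replace (u + h - u) with h in HG by ring. replace (u - u) with 0 in HG by ring.
  set (A := RInt p0 u (u+h)) in *. set (B := RInt (fun x => Kf h (x-u) * p3 x) u (u+h)) in *.
  assert (H: A = B - (B - A)) by lra. rewrite H, HG. unfold Kf. apply Rminus_diag_uniq. field.
Qed.

Lemma sum_n_S (a : nat -> R) n : sum_n a (S n) = sum_n a n + a (S n).
Proof. rewrite sum_Sn. reflexivity. Qed.

Lemma sum_n_0 (a : nat -> R) : sum_n a 0 = a 0%nat.
Proof. apply sum_O. Qed.

Definition rem_n (p3 : R -> R) h (n : nat) :=
  RInt (fun x => Kf h (x - INR n * h) * p3 x) (INR n * h) (INR n * h + h).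

Lemma EMsum (p0 p1 p2 p3 : R -> R) h :
  (forall x, is_derive p0 x (p1 x)) -> (forall x, is_derive p1 x (p2 x)) ->
  (forall x, is_derive p2 x (p3 x)) -> (forall x, continuous p3 x) ->
  forall M,
  h * sum_n (fun k => p0 (INR k * h)) (S M) =
  RInt p0 0 (INR (S M) * h) + h/2*(p0 0 + p0 (INR (S M) * h))
  + h^2/12*(p1 (INR (S M)*h) - p1 0) - sum_n (rem_n p3 h) M.
Proof.
  intros D0 D1 D2 C3.
  assert (Ex : forall a b, ex_RInt p0 a b).
  { intros a b. apply exR_cont. intros; eapply cont_of_der; eauto. }
  induction M as [|M IH].
  - rewrite sum_n_S, !sum_n_0. unfold rem_n.
    simpl INR. rewrite !Rmult_0_l, !Rmult_1_l, Rplus_0_l.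
    pose proof (EM1 p0 p1 p2 p3 0 h D0 D1 D2 C3) as E.
    rewrite Rplus_0_l in E. rewrite E.
    replace (fun x => Kf h (x - 0) * p3 x) with (fun x => Kf h (x - 0 * h) * p3 x).
    2: { apply FunctionalExtensionality.functional_extensionality. intros x. rewrite Rmult_0_l. reflexivity. }
    lra.
  - rewrite sum_n_S. rewrite Rmult_plus_distr_l, IH. rewrite (sum_n_S (rem_n p3 h)).
    idtac.
    pose proof (EM1 p0 p1 p2 p3 (INR (S M) * h) h D0 D1 D2 C3) as E.
    replace (INR (S (S M)) * h) with (INR (S M) * h + h) by (rewrite (S_INR (S M)); ring).
    rewrite <- (RInt_Ch p0 0 (INR (S M) * h) (INR (S M) * h + h)); auto.
    rewrite E. unfold rem_n. apply Rminus_diag_uniq. set (SS := sum_n _ M). set (I1 := RInt (fun x => Kf h _ * p3 x) _ _). set (I0 := RInt p0 _ _). clearbody SS I1 I0. field.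
Qed.

Lemma Kf_bound h t : 0 <= t <= h -> Rabs (Kf h t) <= h^3.
Proof.
  intros Ht. unfold Kf. apply Rabs_le.
  assert (0 <= t^2 <= h^2) by (split; nra).
  assert (0 <= t^3 <= h^3) by (split; [apply pow_le; lra|]; simpl; nra).
  assert (0 <= h * t^2 <= h^3) by (split; simpl in *; nra).
  assert (0 <= h^2 * t <= h^3) by (split; simpl in *; nra).
  split; lra.
Qed.

Lemma rem_bound (p3 : R -> R) h n : 0 < h -> (forall x, continuous p3 x) ->
  Rabs (rem_n p3 h n) <= h^3 * RInt (fun x => Rabs (p3 x)) (INR n * h) (INR n * h + h).
Proof.
  intros Hh C3. unfold rem_n.
  assert (ExA : forall a b, ex_RInt (fun x => Rabs (p3 x)) a b).
  { intros a b. apply exR_cont. intros z _.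
    apply (continuous_comp p3 Rabs). apply C3. apply continuous_Rabs. }
  assert (ExK : forall a b u, ex_RInt (fun x => Kf h (x - u) * p3 x) a b).
  { intros a b u. apply exR_cont. intros z _. apply (continuous_mult (K:=R_AbsRing)); auto.
    apply (ex_derive_continuous (K:=R_AbsRing) (V:=R_NormedModule)). unfold Kf. auto_derive. auto. }
  eapply Rle_trans. apply abs_RInt_le. lra. apply ExK.
  assert (Esc : h^3 * RInt (fun x => Rabs (p3 x)) (INR n * h) (INR n * h + h) =
     RInt (fun x => h^3 * Rabs (p3 x)) (INR n * h) (INR n * h + h)).
  { symmetry. exact (RInt_scal (V:=R_CompleteNormedModule) _ _ _ _ (ExA _ _)). }
  rewrite Esc.
  apply RInt_le. lra.
  - apply exR_cont. intros z _. apply (continuous_comp _ Rabs).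
    apply (continuous_mult (K:=R_AbsRing)); auto.
    apply (ex_derive_continuous (K:=R_AbsRing) (V:=R_NormedModule)). unfold Kf. auto_derive. auto.
    apply continuous_Rabs.
  - apply (ex_RInt_scal (V:=R_CompleteNormedModule)). apply ExA.
  - intros x Hx. rewrite Rabs_mult. apply Rmult_le_compat_r. apply Rabs_pos.
    apply Kf_bound. lra.
Qed.

Lemma sum_abs_int (q : R -> R) h M : (forall a b, ex_RInt q a b) ->
  sum_n (fun n => RInt q (INR n * h) (INR n * h + h)) M = RInt q 0 (INR (S M) * h).
Proof.
  intros Ex. induction M as [|M IH].
  - rewrite sum_n_0. simpl. f_equal; ring.
  - rewrite sum_n_S. etransitivity. apply (f_equal (fun z => z + RInt q (INR (S M) * h) (INR (S M) * h + h)) IH).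
    replace (INR (S (S M)) * h) with (INR (S M) * h + h) by (rewrite (S_INR (S M)); ring).
    apply RInt_Ch; auto.
Qed.

Lemma lim_Sh h : 0 < h -> is_lim_seq (fun M => INR (S M) * h) p_infty.
Proof.
  intros Hh.
  apply is_lim_seq_ext with (fun M => h * INR (S M)). intros; ring.
  replace p_infty with (Rbar_mult h p_infty).
  2: { simpl. destruct (Rle_dec 0 h); [|lra]. destruct (Rle_lt_or_eq_dec 0 h r); auto; lra. }
  apply is_lim_seq_scal_l. apply -> is_lim_seq_incr_1. apply is_lim_seq_INR.
Qed.

Lemma IR_seq u l h : 0 < h -> IR u l -> is_lim_seq (fun M => RInt u 0 (INR (S M) * h)) l.
Proof.
  intros Hh [_ Hl]. unfold is_lim_seq.
  eapply filterlim_comp. apply lim_Sh; auto. exact Hl.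
Qed.

Lemma lim_seq_fun (p : R -> R) h : 0 < h -> is_lim p p_infty 0 ->
  is_lim_seq (fun M => p (INR (S M) * h)) 0.
Proof.
  intros Hh Hp. unfold is_lim_seq.
  eapply filterlim_comp. apply lim_Sh; auto. exact Hp.
Qed.

Lemma sum_shift (f : nat -> R) M : sum_n (fun n => f (S n)) M = sum_n f (S M) - f 0%nat.
Proof.
  induction M as [|M IH].
  - rewrite sum_n_S, !sum_n_0. lra.
  - rewrite (sum_n_S (fun n => f (S n))), (sum_n_S f (S M)). lra.
Qed.

Lemma series_formula (p0 p1 p2 p3 : R -> R) h L I :
  0 < h ->
  (forall x, is_derive p0 x (p1 x)) -> (forall x, is_derive p1 x (p2 x)) ->
  (forall x, is_derive p2 x (p3 x)) -> (forall x, continuous p3 x) ->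
  IR p0 L -> IR (fun x => Rabs (p3 x)) I ->
  is_lim p0 p_infty 0 -> is_lim p1 p_infty 0 ->
  exists Rm, Rabs Rm <= h^3 * I /\
    is_series (fun n => p0 (INR (S n) * h))
      (L / h + p0 0 / 2 - p0 0 - h / 12 * p1 0 - Rm / h).
Proof.
  intros Hh D0 D1 D2 C3 HL HI L0 L1.
  set (c := (fun n => RInt (fun x => Rabs (p3 x)) (INR n * h) (INR n * h + h)) : nat -> R).
  assert (ExA : forall a b, ex_RInt (fun x => Rabs (p3 x)) a b).
  { intros a b. apply exR_cont. intros z _.
    apply (continuous_comp p3 Rabs). apply C3. apply continuous_Rabs. }
  assert (Hc : is_series c I).
  { change (is_lim_seq (sum_n c) I). apply is_lim_seq_ext with (fun M => RInt (fun x => Rabs (p3 x)) 0 (INR (S M) * h)).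
    - intros M. unfold c. symmetry. apply sum_abs_int; auto.
    - apply IR_seq; auto. }
  assert (Hc0 : forall n, 0 <= c n).
  { intros n. unfold c. apply RInt_ge_0. lra. apply ExA. intros; apply Rabs_pos. }
  assert (Hrb : forall n, Rabs (rem_n p3 h n) <= h^3 * c n).
  { intros n. apply rem_bound; auto. }
  assert (Exr : ex_series (fun n => Rabs (rem_n p3 h n))).
  { apply (ex_series_le (K:=R_AbsRing) (V:=R_CompleteNormedModule)) with (fun n => h^3 * c n).
    - intros n. change (Rabs (Rabs (rem_n p3 h n)) <= h^3 * c n). rewrite Rabs_Rabsolu. auto.
    - apply (ex_series_scal_l (K:=R_AbsRing) (V:=R_NormedModule)). exists I; auto. }
  exists (Series (rem_n p3 h)). split.
  - eapply Rle_trans. apply Series_Rabs; auto.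
    rewrite <- (is_series_unique c I Hc). rewrite <- Series_scal_l.
    apply Series_le. intros n; split; [apply Rabs_pos|auto].
    apply (ex_series_scal_l (K:=R_AbsRing) (V:=R_NormedModule)). exists I; auto.
  - assert (Hr : is_lim_seq (sum_n (rem_n p3 h)) (Series (rem_n p3 h))).
    { apply (Series_correct (rem_n p3 h)). apply ex_series_Rabs. auto. }
    unfold is_series.
    change (is_lim_seq (sum_n (fun n => p0 (INR (S n) * h)))
      (L / h + p0 0 / 2 - p0 0 - h / 12 * p1 0 - Series (rem_n p3 h) / h)).
    apply is_lim_seq_ext with (fun M => / h * (RInt p0 0 (INR (S M) * h) + h/2*(p0 0 + p0 (INR (S M) * h))
      + h^2/12*(p1 (INR (S M)*h) - p1 0) - sum_n (rem_n p3 h) M) - p0 0).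
    + intros M. rewrite <- (EMsum p0 p1 p2 p3 h D0 D1 D2 C3 M).
      rewrite (sum_shift (fun k => p0 (INR k * h))).
      replace (INR 0 * h) with 0 by (simpl; ring). apply Rminus_diag_uniq. field. lra.
    + replace (L / h + p0 0 / 2 - p0 0 - h / 12 * p1 0 - Series (rem_n p3 h) / h)
        with (/ h * (L + h/2*(p0 0 + 0) + h^2/12*(0 - p1 0) - Series (rem_n p3 h)) - p0 0)
        by (field; lra).
      apply is_lim_seq_minus'; [|apply is_lim_seq_const].
      apply is_lim_seq_scal_l with (a := / h) (lu := Finite _).
      apply is_lim_seq_minus'; auto.
      apply is_lim_seq_plus'.
      apply is_lim_seq_plus'.
      * apply IR_seq; auto.
      * apply is_lim_seq_scal_l with (lu := Finite _).
        apply is_lim_seq_plus'. apply is_lim_seq_const. apply lim_seq_fun; auto.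
      * apply is_lim_seq_scal_l with (lu := Finite _).
        apply is_lim_seq_minus'. apply lim_seq_fun; auto. apply is_lim_seq_const.
Qed.

Lemma exp_mono x y : x <= y -> exp x <= exp y.
Proof. intros [H|H]. left; apply exp_increasing; auto. subst; lra. Qed.

Lemma exp_INR_mult k y : exp (INR k * y) = exp y ^ k.
Proof.
  induction k as [|k IH].
  - simpl. rewrite Rmult_0_l, exp_0. reflexivity.
  - rewrite S_INR. replace ((INR k + 1) * y) with (INR k * y + y) by ring.
    rewrite exp_plus, IH. simpl. ring.
Qed.

Lemma pow_exp_bound k c x : 0 < c -> 0 <= x -> x^k * exp (-(c*x)) <= (INR k / c)^k.
Proof.
  intros Hc Hx. destruct k as [|k].
  - simpl. rewrite Rmult_1_l. rewrite <- exp_0. apply exp_mono. nra.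
  - set (n := INR (S k)).
    assert (Hn : 0 < n) by (unfold n; apply lt_0_INR; lia).
    set (y := c * x / n).
    assert (Hy : 0 <= y) by (unfold y; apply Rdiv_le_0_compat; nra).
    assert (Hey : y <= exp y) by (generalize (exp_ineq1_le y); lra).
    assert (E : x = (n / c) * y) by (unfold y; field; lra).
    assert (E2 : exp (c * x) = exp y ^ (S k)).
    { rewrite <- exp_INR_mult. f_equal. fold n. unfold y. field. lra. }
    rewrite E at 1. rewrite Rpow_mult_distr.
    rewrite exp_Ropp, E2.
    assert (0 < exp y ^ S k) by (apply pow_lt; apply exp_pos).
    assert (y ^ S k <= exp y ^ S k) by (apply pow_incr; lra).
    assert (0 <= (n/c) ^ S k) by (apply pow_le; apply Rdiv_le_0_compat; lra).
    apply Rle_trans with ((n / c) ^ S k * (exp y ^ S k) * / exp y ^ S k).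
    + apply Rmult_le_compat_r. left; apply Rinv_0_lt_compat; auto.
      apply Rmult_le_compat_l; auto.
    + right. field. lra.
Qed.

Lemma mvt_bound (F dF : R -> R) t B : (forall x, Rabs x <= Rabs t -> is_derive F x (dF x)) ->
  (forall c, Rabs c <= Rabs t -> Rabs (dF c) <= B) -> Rabs (F t - F 0) <= B * Rabs t.
Proof.
  intros HD HB.
  destruct (MVT_gen F 0 t dF) as [c [Hc E]].
  - intros x Hx; apply HD. unfold Rmin, Rmax in Hx. destruct (Rle_dec 0 t); apply Rabs_le; split_Rabs; lra.
  - intros x Hx. apply continuity_pt_filterlim.
    apply (ex_derive_continuous (K:=R_AbsRing) (V:=R_NormedModule)). eexists; apply HD.
    unfold Rmin, Rmax in Hx. destruct (Rle_dec 0 t); apply Rabs_le; split_Rabs; lra.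
  - rewrite E. rewrite Rabs_mult. replace (t - 0) with t by ring.
    apply Rmult_le_compat_r. apply Rabs_pos. apply HB.
    unfold Rmin, Rmax in Hc. destruct (Rle_dec 0 t); apply Rabs_le; split_Rabs; lra.
Qed.

Lemma T0 t : Rabs (exp t - 1) <= Rabs t * exp (Rabs t).
Proof.
  replace (exp t - 1) with (exp t - exp 0) by (rewrite exp_0; ring).
  rewrite Rmult_comm. apply (mvt_bound exp exp).
  - intros x _. apply is_derive_exp.
  - intros c Hc. rewrite Rabs_pos_eq by (left; apply exp_pos). apply exp_mono.
    split_Rabs; lra.
Qed.

Lemma T1 t : Rabs (exp t - 1 - t) <= t^2 * exp (Rabs t).
Proof.
  assert (H := mvt_bound (fun t => exp t - 1 - t) (fun t => exp t - 1) t (Rabs t * exp (Rabs t))).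
  simpl in H. rewrite exp_0 in H. replace (1 - 1 - 0) with 0 in H by ring.
  rewrite Rminus_0_r in H.
  replace (t^2) with (Rabs t * Rabs t) by (rewrite <- Rabs_mult; simpl; rewrite Rmult_1_r; apply Rabs_pos_eq; nra).
  eapply Rle_trans. apply H.
  - intros x _. auto_derive; auto; ring.
  - intros c Hc. eapply Rle_trans. apply T0.
    apply Rmult_le_compat; auto using Rabs_pos. left; apply exp_pos.
    apply exp_mono; auto.
  - right; ring.
Qed.

Lemma T2 t : Rabs (exp t - 1 - t - t^2/2) <= Rabs t ^ 3 * exp (Rabs t).
Proof.
  assert (H := mvt_bound (fun t => exp t - 1 - t - t^2/2) (fun t => exp t - 1 - t) t (t^2 * exp (Rabs t))).
  cbv beta in H. rewrite exp_0 in H. replace (1 - 1 - 0 - 0 ^ 2 / 2) with 0 in H by field.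
  rewrite Rminus_0_r in H.
  eapply Rle_trans. apply H.
  - intros x _. auto_derive; auto. field.
  - intros c Hc. eapply Rle_trans. apply T1.
    apply Rmult_le_compat. apply pow2_ge_0. left; apply exp_pos.
    replace (c^2) with (Rabs c ^2) by (apply pow2_abs).
    replace (t^2) with (Rabs t ^2) by (apply pow2_abs).
    apply pow_incr. split; auto using Rabs_pos.
    apply exp_mono; auto.
  - right. replace (t^2) with (Rabs t ^2) by (apply pow2_abs).
    ring.
Qed.

Lemma deriv_from_bound (F : R -> R) x l d K : 0 < d ->
  (forall e, Rabs e <= d -> Rabs (F (x+e) - F x - e * l) <= K * e^2) -> is_derive F x l.
Proof.
  intros Hd HB. apply is_derive_Reals. intros eps Heps.
  set (K' := Rabs K + 1).
  assert (HK' : 0 < K') by (unfold K'; generalize (Rabs_pos K); lra).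
  assert (Hd0 : 0 < Rmin d (eps / K')) by (apply Rmin_pos; auto; apply Rdiv_lt_0_compat; auto).
  exists (mkposreal _ Hd0). intros e He0 He. simpl in He.
  assert (He1 : Rabs e <= d) by (generalize (Rmin_l d (eps/K')); lra).
  assert (He2 : Rabs e < eps / K') by (generalize (Rmin_r d (eps/K')); lra).
  specialize (HB e He1).
  assert (Hae : 0 < Rabs e) by (apply Rabs_pos_lt; auto).
  replace ((F (x + e) - F x) / e - l) with ((F (x + e) - F x - e * l) / e) by (field; auto).
  unfold Rdiv. rewrite Rabs_mult, Rabs_inv.
  apply Rle_lt_trans with (K' * Rabs e).
  - apply Rmult_le_reg_r with (Rabs e); auto.
    rewrite Rmult_assoc, Rinv_l by lra. rewrite Rmult_1_r.
    eapply Rle_trans. apply HB.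
    replace (e^2) with (Rabs e * Rabs e) by (rewrite <- Rabs_mult; simpl; rewrite Rmult_1_r; apply Rabs_pos_eq; nra).
    unfold K'. generalize (Rle_abs K). nra.
  - apply Rmult_lt_reg_l with (/ K'). apply Rinv_0_lt_compat; auto.
    rewrite <- Rmult_assoc, Rinv_l by lra. rewrite Rmult_1_l.
    replace (/ K' * eps) with (eps / K') by (unfold Rdiv; ring). auto.
Qed.

Lemma IR_uniq u l1 l2 : IR u l1 -> IR u l2 -> l1 = l2.
Proof. intros H1 H2. rewrite <- (IR_unique _ _ H1). apply IR_unique; auto. Qed.

Definition lam fd k g := RInt_gen (fun x => x^k * phi0 fd g x) (at_point 0) (Rbar_locally p_infty).

Lemma Ee_cont0 fd j x : HDer fd -> (j < 4)%nat -> continuous (Ee fd j) x.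
Proof. intros HD Hj. apply Ee_cont; auto. Qed.

Lemma cont_xk_phi0 fd k g x : HDer fd -> continuous (fun x => x^k * phi0 fd g x) x.
Proof.
  intros HD. apply (ex_derive_continuous (K:=R_AbsRing) (V:=R_NormedModule)).
  unfold phi0. auto_derive. eexists. apply Ee_der; [lia|apply HD; lia].
Qed.

Lemma pe_bound x m c a' g' : 0 <= x -> 0 < c -> a' + c <= g' ->
  x^m * exp (-(g' * x)) <= (INR m / c)^m * exp (-(a' * x)).
Proof.
  intros Hx Hc Hg.
  replace (exp (-(g' * x))) with (exp (-(c*x)) * exp (-((g'-c)*x)))
    by (rewrite <- exp_plus; f_equal; ring).
  rewrite <- Rmult_assoc.
  apply Rmult_le_compat.
  - apply Rmult_le_pos. apply pow_le; auto. left; apply exp_pos.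
  - left; apply exp_pos.
  - apply pow_exp_bound; auto.
  - apply exp_mono. nra.
Qed.

Lemma lam_IR fd a' J0 k g c : HDer fd -> IR (fun x => Rabs (phi0 fd a' x)) J0 ->
  0 < c -> a' + c <= g ->
  IR (fun x => x^k * phi0 fd g x) (lam fd k g) /\ Rabs (lam fd k g) <= (INR k / c)^k * J0.
Proof.
  intros HD HJ Hc Hg.
  destruct (IR_cmp (fun x => x^k * phi0 fd g x) (fun x => (INR k / c)^k * Rabs (phi0 fd a' x))
     ((INR k / c)^k * J0)) as [lu [Hlu Hb]].
  - intros x. apply cont_xk_phi0; auto.
  - intros x Hx. unfold phi0. rewrite !Rabs_mult.
    rewrite (Rabs_pos_eq (exp _)) by (left; apply exp_pos).
    rewrite (Rabs_pos_eq (exp _)) by (left; apply exp_pos).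
    rewrite (Rabs_pos_eq (x^k)) by (apply pow_le; auto).
    rewrite <- Rmult_assoc, <- Rmult_assoc.
    apply Rmult_le_compat_r. apply Rabs_pos. apply pe_bound; auto.
  - apply IR_scal; auto.
  - assert (E : lam fd k g = lu) by (unfold lam; exact (IR_unique _ _ Hlu)). rewrite E. auto.
Qed.

Lemma lam_T1 fd a' J0 k g e c : HDer fd -> IR (fun x => Rabs (phi0 fd a' x)) J0 ->
  0 < c -> a' + c <= g - Rabs e ->
  Rabs (lam fd k (g+e) - lam fd k g + e * lam fd (S k) g) <= e^2 * ((INR (k+2) / c)^(k+2) * J0).
Proof.
  intros HD HJ Hc Hg.
  assert (Hae := Rabs_pos e). assert (Hle := Rle_abs e). assert (Hle2 := Rle_abs (-e)).
  rewrite Rabs_Ropp in Hle2.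
  destruct (lam_IR fd a' J0 k (g+e) c HD HJ Hc ltac:(lra)) as [I1 _].
  destruct (lam_IR fd a' J0 k g c HD HJ Hc ltac:(lra)) as [I2 _].
  destruct (lam_IR fd a' J0 (S k) g c HD HJ Hc ltac:(lra)) as [I3 _].
  pose proof (IR_plus _ _ _ _ (IR_minus _ _ _ _ I1 I2) (IR_scal e _ _ I3)) as Iu.
  destruct (IR_cmp (fun x => x ^ k * phi0 fd (g + e) x - x ^ k * phi0 fd g x + e * (x ^ S k * phi0 fd g x))
     (fun x => e^2 * ((INR (k+2) / c)^(k+2) * Rabs (phi0 fd a' x)))
     (e^2 * ((INR (k+2) / c)^(k+2) * J0))) as [lu [Hlu Hb]].
  - intros x. apply (continuous_plus (K:=R_AbsRing) (V:=R_NormedModule)).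
    apply (continuous_minus (K:=R_AbsRing) (V:=R_NormedModule)); apply cont_xk_phi0; auto.
    apply (continuous_scal_r (K:=R_AbsRing) (V:=R_NormedModule)). apply cont_xk_phi0; auto.
  - intros x Hx. unfold phi0.
    replace (x ^ k * (exp (- ((g + e) * x)) * Ee fd 0 x) - x ^ k * (exp (- (g * x)) * Ee fd 0 x) +
      e * (x ^ S k * (exp (- (g * x)) * Ee fd 0 x)))
      with ((x ^ k * exp (- (g * x)) * Ee fd 0 x) * (exp (-e * x) - 1 - (- e * x)))
      by (replace (exp (- ((g + e) * x))) with (exp (-(g*x)) * exp (-e*x))
            by (rewrite <- exp_plus; f_equal; ring); simpl; ring).
    rewrite Rabs_mult. eapply Rle_trans.
    { apply Rmult_le_compat_l. apply Rabs_pos. apply T1. }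
    rewrite Rabs_mult, Rabs_mult.
    rewrite (Rabs_pos_eq (exp _)) by (left; apply exp_pos).
    rewrite (Rabs_pos_eq (x^k)) by (apply pow_le; auto).
    replace (Rabs (- e * x)) with (Rabs e * x) by (rewrite Rabs_mult, Rabs_Ropp, (Rabs_pos_eq x); auto).
    replace (x ^ k * exp (- (g * x)) * Rabs (Ee fd 0 x) * ((- e * x) ^ 2 * exp (Rabs e * x)))
      with (e^2 * ((x ^ (k+2) * exp (- ((g - Rabs e) * x))) * Rabs (Ee fd 0 x)))
      by (replace (exp (- ((g - Rabs e) * x))) with (exp (- (g * x)) * exp (Rabs e * x))
            by (rewrite <- exp_plus; f_equal; ring);
          rewrite pow_add; simpl; ring).
    apply Rmult_le_compat_l. apply pow2_ge_0.
    rewrite Rabs_mult, (Rabs_pos_eq (exp _)) by (left; apply exp_pos).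
    rewrite <- Rmult_assoc. apply Rmult_le_compat_r. apply Rabs_pos.
    apply pe_bound; auto.
  - apply IR_scal. apply IR_scal. auto.
  - rewrite <- (IR_uniq _ _ _ Hlu Iu). auto.
Qed.

Lemma lam_T2 fd a' J0 g e c : HDer fd -> IR (fun x => Rabs (phi0 fd a' x)) J0 ->
  0 < c -> a' + c <= g - Rabs e ->
  Rabs (lam fd 0 (g+e) - lam fd 0 g + e * lam fd 1 g - e^2/2 * lam fd 2 g)
    <= Rabs e^3 * ((INR 3 / c)^3 * J0).
Proof.
  intros HD HJ Hc Hg.
  assert (Hae := Rabs_pos e). assert (Hle := Rle_abs e). assert (Hle2 := Rle_abs (-e)).
  rewrite Rabs_Ropp in Hle2.
  destruct (lam_IR fd a' J0 0 (g+e) c HD HJ Hc ltac:(lra)) as [I1 _].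
  destruct (lam_IR fd a' J0 0 g c HD HJ Hc ltac:(lra)) as [I2 _].
  destruct (lam_IR fd a' J0 1 g c HD HJ Hc ltac:(lra)) as [I3 _].
  destruct (lam_IR fd a' J0 2 g c HD HJ Hc ltac:(lra)) as [I4 _].
  pose proof (IR_minus _ _ _ _ (IR_plus _ _ _ _ (IR_minus _ _ _ _ I1 I2) (IR_scal e _ _ I3))
     (IR_scal (e^2/2) _ _ I4)) as Iu.
  destruct (IR_cmp (fun x => x ^ 0 * phi0 fd (g + e) x - x ^ 0 * phi0 fd g x + e * (x ^ 1 * phi0 fd g x)
                  - e^2/2 * (x^2 * phi0 fd g x))
     (fun x => Rabs e^3 * ((INR 3 / c)^3 * Rabs (phi0 fd a' x)))
     (Rabs e^3 * ((INR 3 / c)^3 * J0))) as [lu [Hlu Hb]].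
  - intros x. apply (continuous_minus (K:=R_AbsRing) (V:=R_NormedModule)).
    apply (continuous_plus (K:=R_AbsRing) (V:=R_NormedModule)).
    apply (continuous_minus (K:=R_AbsRing) (V:=R_NormedModule)); apply cont_xk_phi0; auto.
    apply (continuous_scal_r (K:=R_AbsRing) (V:=R_NormedModule)). apply cont_xk_phi0; auto.
    apply (continuous_scal_r (K:=R_AbsRing) (V:=R_NormedModule)). apply cont_xk_phi0; auto.
  - intros x Hx. unfold phi0.
    replace (x ^ 0 * (exp (- ((g + e) * x)) * Ee fd 0 x) - x ^ 0 * (exp (- (g * x)) * Ee fd 0 x) +
      e * (x ^ 1 * (exp (- (g * x)) * Ee fd 0 x)) - e^2/2 * (x^2 * (exp (- (g * x)) * Ee fd 0 x)))
      with ((exp (- (g * x)) * Ee fd 0 x) * (exp (-e * x) - 1 - (- e * x) - (- e * x)^2/2))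
      by (replace (exp (- ((g + e) * x))) with (exp (-(g*x)) * exp (-e*x))
            by (rewrite <- exp_plus; f_equal; ring); field).
    rewrite Rabs_mult. eapply Rle_trans.
    { apply Rmult_le_compat_l. apply Rabs_pos. apply T2. }
    rewrite Rabs_mult.
    rewrite (Rabs_pos_eq (exp _)) by (left; apply exp_pos).
    replace (Rabs (- e * x)) with (Rabs e * x) by (rewrite Rabs_mult, Rabs_Ropp, (Rabs_pos_eq x); auto).
    replace (exp (- (g * x)) * Rabs (Ee fd 0 x) * ((Rabs e * x) ^ 3 * exp (Rabs e * x)))
      with (Rabs e^3 * ((x ^ 3 * exp (- ((g - Rabs e) * x))) * Rabs (Ee fd 0 x)))
      by (replace (exp (- ((g - Rabs e) * x))) with (exp (- (g * x)) * exp (Rabs e * x))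
            by (rewrite <- exp_plus; f_equal; ring); ring).
    apply Rmult_le_compat_l. apply pow_le; auto.
    rewrite Rabs_mult, (Rabs_pos_eq (exp _)) by (left; apply exp_pos).
    rewrite <- Rmult_assoc. apply Rmult_le_compat_r. apply Rabs_pos.
    apply pe_bound; auto.
  - apply IR_scal. apply IR_scal. auto.
  - rewrite <- (IR_uniq _ _ _ Hlu Iu). auto.
Qed.

Lemma exists_between (gm : Rbar) (g : R) : Rbar_lt gm g -> exists a' : R, Rbar_lt gm a' /\ a' < g.
Proof.
  destruct gm as [m| |]; intros H; simpl in H.
  - exists ((m+g)/2). split; [simpl; lra | lra].
  - contradiction.
  - exists (g - 1). split; [simpl; auto | lra].
Qed.

Lemma IRJ fd a' j : HDer fd -> (j < 4)%nat ->
  ex_RInt_gen (fun x => Rabs (exp (- (a' * x)) * fd j x)) (at_point 0) (Rbar_locally p_infty) ->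
  exists J, IR (fun x => Rabs (exp (- (a' * x)) * Ee fd j x)) J.
Proof.
  intros HD Hj Hg.
  assert (Hc : forall x, continuous (fun x => Rabs (exp (- (a' * x)) * Ee fd j x)) x).
  { intros x. apply (continuous_comp _ Rabs). 2: apply continuous_Rabs.
    apply (ex_derive_continuous (K:=R_AbsRing) (V:=R_NormedModule)). auto_derive.
    eexists. apply Ee_der; auto. }
  eexists. apply IR_ext with (fun x => Rabs (exp (- (a' * x)) * fd j x)).
  - intros x Hx. rewrite Ee_pos; auto; lra.
  - apply IR_ex_gen; auto.
    intros b Hb. apply ex_RInt_ext with (fun x => Rabs (exp (- (a' * x)) * Ee fd j x)).
    + intros x Hx. rewrite Rmin_left in Hx by lra. rewrite Ee_pos; auto; lra.
    + apply exR_cont. intros; auto.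
Qed.

Lemma Lap_lam f fd a' J0 c y : HDer fd -> (forall x, 0 <= x -> fd 0%nat x = f x) ->
  IR (fun x => Rabs (phi0 fd a' x)) J0 -> 0 < c -> a' + c <= y -> Lap f y = lam fd 0 y.
Proof.
  intros HD Hf HJ Hc Hy.
  destruct (lam_IR fd a' J0 0 y c HD HJ Hc Hy) as [HI _].
  unfold Lap. apply IR_unique.
  apply IR_ext with (fun x => x ^ 0 * phi0 fd y x); auto.
  intros x Hx. unfold phi0. rewrite Ee_pos by lra. rewrite Hf by lra. simpl. ring.
Qed.

Lemma lam_der fd a' J0 k g : HDer fd -> IR (fun x => Rabs (phi0 fd a' x)) J0 -> a' < g ->
  is_derive (lam fd k) g (- lam fd (S k) g).
Proof.
  intros HD HJ Hg.
  apply deriv_from_bound with ((g - a')/2) ((INR (k+2) / ((g-a')/2))^(k+2) * J0).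
  - lra.
  - intros e He.
    replace (lam fd k (g + e) - lam fd k g - e * - lam fd (S k) g)
      with (lam fd k (g + e) - lam fd k g + e * lam fd (S k) g) by ring.
    eapply Rle_trans; [apply lam_T1 with (a' := a') (J0 := J0) (c := (g-a')/2); auto; lra | right; ring].
Qed.

Lemma Lap_der1 f fd a' J0 y : HDer fd -> (forall x, 0 <= x -> fd 0%nat x = f x) ->
  IR (fun x => Rabs (phi0 fd a' x)) J0 -> a' < y -> Derive (Lap f) y = - lam fd 1 y.
Proof.
  intros HD Hf HJ Hy.
  rewrite (Derive_ext_loc (Lap f) (lam fd 0)).
  - apply is_derive_unique. apply lam_der with a' J0; auto.
  - exists (mkposreal ((y - a')/2) ltac:(lra)). intros z Hz.
    unfold ball in Hz; simpl in Hz; unfold AbsRing_ball, abs, minus, plus, opp in Hz; simpl in Hz.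
    apply Rabs_def2 in Hz.
    apply Lap_lam with a' J0 ((y - a')/2); auto; lra.
Qed.

Lemma Lap_der2 f fd a' J0 y : HDer fd -> (forall x, 0 <= x -> fd 0%nat x = f x) ->
  IR (fun x => Rabs (phi0 fd a' x)) J0 -> a' < y -> Derive_n (Lap f) 2 y = lam fd 2 y.
Proof.
  intros HD Hf HJ Hy.
  change (Derive (fun z => Derive (Lap f) z) y = lam fd 2 y).
  rewrite (Derive_ext_loc (fun z => Derive (Lap f) z) (fun z => - lam fd 1 z)).
  - apply is_derive_unique.
    replace (lam fd 2 y) with (- - lam fd 2 y) by ring.
    apply (is_derive_opp (K:=R_AbsRing) (V:=R_NormedModule) (lam fd 1)).
    apply lam_der with a' J0; auto.
  - exists (mkposreal ((y - a')/2) ltac:(lra)). intros z Hz.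
    unfold ball in Hz; simpl in Hz; unfold AbsRing_ball, abs, minus, plus, opp in Hz; simpl in Hz.
    apply Rabs_def2 in Hz.
    apply Lap_der1 with a' J0; auto; lra.
Qed.

Lemma ln_bound u : Rabs u <= 1/2 -> Rabs (ln (1-u) + u + u^2/2 + u^3/3) <= 2 * u^4.
Proof.
  intros Hu.
  assert (H := mvt_bound (fun x => ln (1-x) + x + x^2/2 + x^3/3) (fun x => - x^3 / (1-x)) u (2 * Rabs u ^ 3)).
  cbv beta in H. replace (1 - 0) with 1 in H by ring. rewrite ln_1 in H.
  replace (0 + 0 + 0 ^ 2 / 2 + 0 ^ 3 / 3) with 0 in H by field. rewrite Rminus_0_r in H.
  replace (2 * u^4) with (2 * Rabs u ^ 3 * Rabs u).
  2: { replace (2 * Rabs u ^ 3 * Rabs u) with (2 * (Rabs u ^ 2)^2) by ring. rewrite pow2_abs. ring. }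
  apply H.
  - intros x Hx. auto_derive.
    + split_Rabs; lra.
    + field. split_Rabs; lra.
  - intros c Hc. unfold Rdiv. rewrite Rabs_mult, Rabs_Ropp, Rabs_inv.
    rewrite <- RPow_abs.
    assert (Hc1 : 1/2 <= Rabs (1 - c)) by (split_Rabs; lra).
    assert (0 <= Rabs c ^ 3) by (apply pow_le; apply Rabs_pos).
    assert (Rabs c ^ 3 <= Rabs u ^ 3) by (apply pow_incr; split; auto; apply Rabs_pos).
    assert (/ Rabs (1 - c) <= 2).
    { replace 2 with (/ (1/2)) by field. apply Rinv_le_contravar; lra. }
    assert (0 <= / Rabs (1-c)) by (left; apply Rinv_0_lt_compat; lra).
    nra.
Qed.

Lemma IR_nonneg u l : IR u l -> (forall x, 0 <= x -> 0 <= u x) -> 0 <= l.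
Proof.
  intros H Hp. pose proof (IR_scal 0 _ _ H) as H0.
  replace 0 with (0 * l) at 1 by ring.
  apply (IR_le _ _ _ _ H0 H). intros x Hx. specialize (Hp x Hx). lra.
Qed.

Lemma I3_bound fd a' be B J0 J1 J2 J3 : HDer fd -> a' <= be -> Rabs be <= B ->
  IR (fun x => Rabs (exp (-(a'*x)) * Ee fd 0 x)) J0 ->
  IR (fun x => Rabs (exp (-(a'*x)) * Ee fd 1 x)) J1 ->
  IR (fun x => Rabs (exp (-(a'*x)) * Ee fd 2 x)) J2 ->
  IR (fun x => Rabs (exp (-(a'*x)) * Ee fd 3 x)) J3 ->
  exists I, IR (fun x => Rabs (phi3 fd be x)) I /\ I <= J3 + 3*B*J2 + 3*B^2*J1 + B^3*J0.
Proof.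
  intros HD Hbe HB H0 H1 H2 H3.
  pose proof (IR_plus _ _ _ _ (IR_plus _ _ _ _ (IR_plus _ _ _ _ H3 (IR_scal (3*B) _ _ H2))
                    (IR_scal (3*B^2) _ _ H1)) (IR_scal (B^3) _ _ H0)) as Hv.
  cbv beta in Hv.
  assert (Hc : forall x, continuous (fun x => Rabs (phi3 fd be x)) x).
  { intros x. apply (continuous_comp _ Rabs). apply phi3_cont; auto. apply continuous_Rabs. }
  assert (Hp : forall x, 0 <= x -> Rabs (Rabs (phi3 fd be x)) <=
     Rabs (exp (- (a' * x)) * Ee fd 3 x) + 3 * B * Rabs (exp (- (a' * x)) * Ee fd 2 x) +
     3 * B ^ 2 * Rabs (exp (- (a' * x)) * Ee fd 1 x) + B ^ 3 * Rabs (exp (- (a' * x)) * Ee fd 0 x)).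
  { intros x Hx. rewrite Rabs_Rabsolu. unfold phi3.
    assert (He : exp (-(be*x)) <= exp (-(a'*x))) by (apply exp_mono; nra).
    assert (Hep : 0 < exp (-(be*x))) by apply exp_pos.
    rewrite !Rabs_mult, !(Rabs_pos_eq (exp _)) by (left; apply exp_pos).
    set (e0 := Rabs (Ee fd 0 x)). set (e1 := Rabs (Ee fd 1 x)).
    set (e2 := Rabs (Ee fd 2 x)). set (e3 := Rabs (Ee fd 3 x)).
    assert (Hs : Rabs (Ee fd 3 x - 3 * be * Ee fd 2 x + 3 * be ^ 2 * Ee fd 1 x - be ^ 3 * Ee fd 0 x)
              <= e3 + 3*B*e2 + 3*B^2*e1 + B^3*e0).
    { assert (Hb0 : 0 <= Rabs be) by apply Rabs_pos.
      assert (Hb2 : Rabs (be^2) <= B^2) by (rewrite <- RPow_abs; apply pow_incr; lra).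
      assert (Hb3 : Rabs (be^3) <= B^3) by (rewrite <- RPow_abs; apply pow_incr; lra).
      assert (0 <= e0) by apply Rabs_pos. assert (0 <= e1) by apply Rabs_pos.
      assert (0 <= e2) by apply Rabs_pos. assert (0 <= e3) by apply Rabs_pos.
      unfold Rminus. eapply Rle_trans. apply Rabs_triang.
      rewrite Rabs_Ropp, Rabs_mult.
      eapply Rle_trans. apply Rplus_le_compat_r. apply Rabs_triang.
      rewrite Rabs_mult, Rabs_mult.
      eapply Rle_trans. apply Rplus_le_compat_r. apply Rplus_le_compat_r. apply Rabs_triang.
      rewrite Rabs_Ropp, !Rabs_mult. fold e0 e1 e2 e3.
      rewrite (Rabs_pos_eq 3) by lra.
      assert (Rabs (be^3) * e0 <= B^3 * e0) by (apply Rmult_le_compat_r; auto).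
      assert (3 * Rabs (be^2) * e1 <= 3 * B^2 * e1) by (apply Rmult_le_compat_r; auto; lra).
      assert (3 * Rabs be * e2 <= 3 * B * e2) by (apply Rmult_le_compat_r; auto; lra).
      lra. }
    apply Rle_trans with (exp (-(a'*x)) * (e3 + 3*B*e2 + 3*B^2*e1 + B^3*e0)).
    + apply Rmult_le_compat; auto. lra. apply Rabs_pos.
    + right. ring. }
  destruct (IR_cmp (fun x => Rabs (phi3 fd be x)) _ _ Hc Hp Hv) as [I [HI Hb]].
  - exists I. split; auto. apply Rle_trans with (Rabs I). apply Rle_abs. auto.
Qed.

Lemma phi_lims fd be : HDer fd ->
  is_lim (fun x => exp (- (be * x)) * fd 0%nat x) p_infty 0 ->
  is_lim (fun x => exp (- (be * x)) * fd 1%nat x) p_infty 0 ->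
  is_lim (phi0 fd be) p_infty 0 /\ is_lim (phi1 fd be) p_infty 0.
Proof.
  intros HD L0 L1.
  assert (L0' : is_lim (phi0 fd be) p_infty 0).
  { apply is_lim_ext_loc with (fun x => exp (- (be * x)) * fd 0%nat x); auto.
    exists 0. intros y Hy. unfold phi0. rewrite Ee_pos; auto; lra. }
  split; auto.
  apply is_lim_ext_loc with (fun x => exp (- (be * x)) * fd 1%nat x - be * (exp (- (be * x)) * fd 0%nat x)).
  - exists 0. intros y Hy. unfold phi1. rewrite !Ee_pos by lra. ring.
  - assert (HL := is_lim_scal_l _ be _ _ L0). simpl in HL. rewrite Rmult_0_r in HL.
    assert (HM := is_lim_minus' _ _ _ _ _ L1 HL). rewrite Rminus_0_r in HM. exact HM.
Qed.

Lemma Fterm_phi f fd s g n : (forall x, 0 <= x -> fd 0%nat x = f x) -> 0 < s ->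
  0 < 1 - g / sqrt s ->
  Fterm f s (1 - g / sqrt s) n =
  phi0 fd (- ln (1 - g / sqrt s) / / sqrt s) (INR (S n) * / sqrt s).
Proof.
  intros Hf Hs Hr. unfold Fterm, phi0.
  assert (Hq : 0 < sqrt s) by (apply sqrt_lt_R0; auto).
  assert (Hn : 0 <= INR (S n) * / sqrt s).
  { apply Rmult_le_pos. apply pos_INR. left; apply Rinv_0_lt_compat; auto. }
  rewrite Ee_pos by auto. rewrite Hf by auto.
  unfold Rdiv at 1. rewrite Rmult_comm. f_equal.
  rewrite <- Rpower_pow by auto. unfold Rpower. f_equal. field. lra.
Qed.

Lemma alg_id h g d L0 L1 L2 T Rm f1 : h <> 0 ->
  / h * (((T + L0 - d*L1 + d^2/2*L2)/h + 1/2 - 1 - h/12*(f1 - (g+d)) - Rm/h)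
         - (/h * L0 + (/2 * g^2 * (-L1) - /2)))
  - (/3 * g^3 * (-L1) + /8 * g^4 * L2 + /12 * (g - f1))
  = h * (T/h^3 - (d - g^2*h/2 - g^3*h^2/3)/h^3 * L1
         + L2/2 * (g^3/3 + (d - g^2*h/2 - g^3*h^2/3)/h^3 * h) * (d/h + g^2/2)
         + (d/h)/12 - Rm/h^3).
Proof. intros Hh. field. auto. Qed.

Lemma abs_mult_le x y A B : Rabs x <= A -> Rabs y <= B -> Rabs (x * y) <= A * B.
Proof.
  intros H1 H2. rewrite Rabs_mult. apply Rmult_le_compat; auto using Rabs_pos.
Qed.

Lemma abs5 a b c d e : Rabs (a - b + c + d - e) <= Rabs a + Rabs b + Rabs c + Rabs d + Rabs e.
Proof. split_Rabs; lra. Qed.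

Lemma bracket_bound h g X Y T' L1 L2 Rm' B Cd Ceta KT L1m L2m K3 :
  0 < h <= 1 -> Rabs g <= B -> Rabs X <= Cd -> Rabs Y <= Ceta -> Rabs T' <= Cd^3 * KT ->
  Rabs L1 <= L1m -> Rabs L2 <= L2m -> Rabs Rm' <= K3 ->
  Rabs (T' - Y * L1 + L2/2 * (g^3/3 + Y * h) * (X + g^2/2) + X/12 - Rm')
   <= Cd^3*KT + Ceta * L1m + L2m/2 * (B^3/3 + Ceta) * (Cd + B^2/2) + Cd/12 + K3.
Proof.
  intros Hh Hg HX HY HT HL1 HL2 HR.
  assert (HB : 0 <= B) by (generalize (Rabs_pos g); lra).
  assert (E1 : Rabs (Y * L1) <= Ceta * L1m) by (apply abs_mult_le; auto).
  assert (Eg3 : Rabs (g^3/3) <= B^3/3).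
  { unfold Rdiv. rewrite Rabs_mult, <- RPow_abs, (Rabs_pos_eq (/3)) by lra.
    apply Rmult_le_compat_r. lra. apply pow_incr. split; auto; apply Rabs_pos. }
  assert (Eg2 : Rabs (g^2/2) <= B^2/2).
  { unfold Rdiv. rewrite Rabs_mult, <- RPow_abs, (Rabs_pos_eq (/2)) by lra.
    apply Rmult_le_compat_r. lra. apply pow_incr. split; auto; apply Rabs_pos. }
  assert (EYh : Rabs (Y * h) <= Ceta).
  { rewrite Rabs_mult, (Rabs_pos_eq h) by lra.
    assert (0 <= Rabs Y) by apply Rabs_pos. nra. }
  assert (E2a : Rabs (g^3/3 + Y*h) <= B^3/3 + Ceta)
    by (eapply Rle_trans; [apply Rabs_triang|lra]).
  assert (E2b : Rabs (X + g^2/2) <= Cd + B^2/2)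
    by (eapply Rle_trans; [apply Rabs_triang|lra]).
  assert (E2c : Rabs (L2/2) <= L2m/2).
  { unfold Rdiv. rewrite Rabs_mult, (Rabs_pos_eq (/2)) by lra. lra. }
  assert (E2 : Rabs (L2/2 * (g^3/3 + Y * h) * (X + g^2/2)) <= L2m/2 * (B^3/3 + Ceta) * (Cd + B^2/2))
    by (apply abs_mult_le; auto; apply abs_mult_le; auto).
  assert (E3 : Rabs (X/12) <= Cd/12).
  { unfold Rdiv. rewrite Rabs_mult, (Rabs_pos_eq (/12)) by lra. lra. }
  eapply Rle_trans. apply abs5. lra.
Qed.

Lemma main_est (f : R -> R) (fd : nat -> R -> R)
  (Hf0 : f 0 = 1)
  (Hfd0 : forall x, 0 <= x -> fd 0%nat x = f x)
  (Hder : forall j, (j < 4)%nat -> deriv_on_nonneg (fd j) (fd (S j)))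
  (HL1 : forall g : R, Rbar_lt (gamma_min f) g -> forall j, (j <= 4)%nat ->
     ex_RInt_gen (fun x => Rabs (exp (- (g * x)) * fd j x))
       (at_point 0) (Rbar_locally p_infty))
  (Hlim : forall g : R, Rbar_lt (gamma_min f) g -> forall j, (j <= 4)%nat ->
     is_lim (fun x => exp (- (g * x)) * fd j x) p_infty 0) (a b : R) :
  Rbar_lt (gamma_min f) a -> a <= b ->
  exists C h0, 0 < h0 <= 1 /\ forall s g, 0 < s -> / sqrt s <= h0 -> a <= g <= b ->
   ex_series (Fterm f s (1 - g / sqrt s)) /\
   Rabs (sqrt s * (Series (Fterm f s (1 - g / sqrt s)) - (sqrt s * Lap f g + Mfun f g))
         - Nfun f (fd 1%nat 0) g) <= C / sqrt s /\
   Rabs (Nfun f (fd 1%nat 0) g) <= C.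
Proof.
  intros Ha Hab.
  assert (HD : HDer fd) by exact Hder.
  destruct (exists_between _ a Ha) as [a' [Ha' Ha'a]].
  set (c := (a - a')/4). assert (Hc : 0 < c) by (unfold c; lra).
  destruct (IRJ fd a' 0 HD ltac:(lia) (HL1 a' Ha' 0%nat ltac:(lia))) as [J0 HJ0].
  destruct (IRJ fd a' 1 HD ltac:(lia) (HL1 a' Ha' 1%nat ltac:(lia))) as [J1 HJ1].
  destruct (IRJ fd a' 2 HD ltac:(lia) (HL1 a' Ha' 2%nat ltac:(lia))) as [J2 HJ2].
  destruct (IRJ fd a' 3 HD ltac:(lia) (HL1 a' Ha' 3%nat ltac:(lia))) as [J3 HJ3].
  assert (HJ : IR (fun x => Rabs (phi0 fd a' x)) J0) by exact HJ0.
  assert (J0p : 0 <= J0) by (apply (IR_nonneg _ _ HJ0); intros; apply Rabs_pos).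
  assert (J1p : 0 <= J1) by (apply (IR_nonneg _ _ HJ1); intros; apply Rabs_pos).
  assert (J2p : 0 <= J2) by (apply (IR_nonneg _ _ HJ2); intros; apply Rabs_pos).
  assert (J3p : 0 <= J3) by (apply (IR_nonneg _ _ HJ3); intros; apply Rabs_pos).
  set (B := Rabs a + Rabs b + 1).
  assert (HB1 : 1 <= B) by (unfold B; generalize (Rabs_pos a) (Rabs_pos b); lra).
  set (L1m := (INR 1 / c)^1 * J0). set (L2m := (INR 2 / c)^2 * J0).
  set (KT := (INR 3 / c)^3 * J0).
  set (K3 := J3 + 3*B*J2 + 3*B^2*J1 + B^3*J0).
  set (Ceta := 2 * B^4). set (Cd := B^2/2 + B^3/3 + Ceta).
  set (CN := B^3/3 * L1m + B^4/8 * L2m + (B + Rabs (fd 1%nat 0))/12).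
  set (CD := Cd^3*KT + Ceta * L1m + L2m/2 * (B^3/3 + Ceta) * (Cd + B^2/2) + Cd/12 + K3).
  assert (HB4 : 1 <= B^4) by (apply pow_R1_Rle; lra).
  assert (HB2 : 1 <= B^2) by (apply pow_R1_Rle; lra).
  assert (HB3 : 1 <= B^3) by (apply pow_R1_Rle; lra).
  assert (HCd : 1 <= Cd) by (unfold Cd, Ceta; lra).
  assert (HKT : 0 <= KT) by (unfold KT; apply Rmult_le_pos; auto; apply pow_le; apply Rdiv_le_0_compat; [apply pos_INR|lra]).
  assert (HL1m : 0 <= L1m) by (unfold L1m; apply Rmult_le_pos; auto; apply pow_le; apply Rdiv_le_0_compat; [apply pos_INR|lra]).
  assert (HL2m : 0 <= L2m) by (unfold L2m; apply Rmult_le_pos; auto; apply pow_le; apply Rdiv_le_0_compat; [apply pos_INR|lra]).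
  set (h0 := Rmin 1 (Rmin (1/(2*B)) (Rmin (c/Cd) (1/Cd)))).
  assert (Hh0p : 0 < h0).
  { unfold h0. repeat apply Rmin_pos; try lra; apply Rdiv_lt_0_compat; lra. }
  assert (Hh0a : h0 <= 1) by apply Rmin_l.
  assert (Hh0b : h0 <= 1/(2*B)) by (unfold h0; eapply Rle_trans; [apply Rmin_r|apply Rmin_l]).
  assert (Hh0c : h0 <= c/Cd) by (unfold h0; eapply Rle_trans; [apply Rmin_r|];
     eapply Rle_trans; [apply Rmin_r|apply Rmin_l]).
  assert (Hh0d : h0 <= 1/Cd) by (unfold h0; eapply Rle_trans; [apply Rmin_r|];
     eapply Rle_trans; [apply Rmin_r|apply Rmin_r]).
  exists (Rabs CN + Rabs CD), h0. split; [lra|].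
  intros s g Hs Hh Hg.
  assert (Hsq : 0 < sqrt s) by (apply sqrt_lt_R0; auto).
  set (h := / sqrt s) in *.
  assert (Hhp : 0 < h) by (unfold h; apply Rinv_0_lt_compat; auto).
  assert (HgB : Rabs g <= B - 1) by (unfold B; split_Rabs; lra).
  assert (HgB' : Rabs g <= B) by lra.
  set (u := g * h).
  assert (HhB : h * B <= 1/2).
  { apply Rle_trans with (1/(2*B) * B). apply Rmult_le_compat_r; lra.
    right. field. lra. }
  assert (Hu : Rabs u <= 1/2).
  { unfold u. rewrite Rabs_mult, (Rabs_pos_eq h) by lra. nra. }
  assert (Hgs : g / sqrt s = u) by (unfold u, h, Rdiv; reflexivity).
  assert (Hu1 : 0 < 1 - u) by (split_Rabs; lra).
  set (be := - ln (1 - u) / h). set (d := be - g).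
  set (eta := d - g^2*h/2 - g^3*h^2/3).
  assert (Heta_eq : eta = - (ln (1-u) + u + u^2/2 + u^3/3) / h)
    by (unfold eta, d, be, u; field; lra).
  assert (Heta : Rabs eta <= Ceta * h^3).
  { rewrite Heta_eq. unfold Rdiv. rewrite Rabs_mult, Rabs_Ropp, Rabs_inv, (Rabs_pos_eq h) by lra.
    apply Rle_trans with (2 * u^4 * / h).
    - apply Rmult_le_compat_r. left; apply Rinv_0_lt_compat; lra. apply ln_bound; auto.
    - unfold u. unfold Ceta.
      replace (2 * (g * h) ^ 4 * / h) with (2 * g^4 * h^3) by (field; lra).
      apply Rmult_le_compat_r. apply pow_le; lra.
      apply Rmult_le_compat_l. lra.
      assert (g^2 <= B^2) by (rewrite <- (pow2_abs g); apply pow_incr; split; [apply Rabs_pos|auto]).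
      assert (0 <= g^2) by apply pow2_ge_0.
      replace (g^4) with ((g^2)^2) by ring. replace (B^4) with ((B^2)^2) by ring. apply pow_incr; lra. }
  assert (Hd_eq : d = g^2*h/2 + g^3*h^2/3 + eta) by (unfold eta; ring).
  assert (Hd : Rabs d <= Cd * h).
  { rewrite Hd_eq. unfold Cd.
    assert (A1 : Rabs (g^2*h/2) <= B^2/2 * h).
    { unfold Rdiv. rewrite !Rabs_mult, <- RPow_abs, (Rabs_pos_eq h), (Rabs_pos_eq (/2)) by lra.
      assert (Rabs g ^ 2 <= B^2) by (apply pow_incr; split; auto; apply Rabs_pos). nra. }
    assert (A2 : Rabs (g^3*h^2/3) <= B^3/3 * h).
    { unfold Rdiv. rewrite !Rabs_mult, <- !RPow_abs, (Rabs_pos_eq h), (Rabs_pos_eq (/3)) by lra.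
      assert (Rabs g ^ 3 <= B^3) by (apply pow_incr; split; auto; apply Rabs_pos).
      assert (0 <= Rabs g ^ 3) by (apply pow_le; apply Rabs_pos).
      assert (h^2 <= h) by (simpl; nra). assert (0 <= h^2) by (apply pow2_ge_0).
      nra. }
    assert (A3 : Ceta * h^3 <= Ceta * h).
    { apply Rmult_le_compat_l. unfold Ceta; lra. simpl. nra. }
    eapply Rle_trans. apply Rabs_triang. eapply Rle_trans. apply Rplus_le_compat_r. apply Rabs_triang.
    lra. }
  assert (Hdc : Rabs d <= c).
  { apply Rle_trans with (Cd * h). auto. apply Rle_trans with (Cd * (c/Cd)).
    apply Rmult_le_compat_l; lra. right; field; lra. }
  assert (Hd1 : Rabs d <= 1).
  { apply Rle_trans with (Cd * h). auto. apply Rle_trans with (Cd * (1/Cd)).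
    apply Rmult_le_compat_l; lra. right; field; lra. }
  assert (Hbe_eq : be = g + d) by (unfold d; ring).
  assert (Hbe_lo : a' + c <= be) by (rewrite Hbe_eq; unfold c in *; split_Rabs; lra).
  assert (HbeB : Rabs be <= B) by (rewrite Hbe_eq; split_Rabs; lra).
  assert (Hgm_be : Rbar_lt (gamma_min f) be).
  { apply Rbar_lt_le_trans with a'; auto. simpl. lra. }
  destruct (lam_IR fd a' J0 0 be c HD HJ Hc Hbe_lo) as [Ilam _].
  assert (IRp0 : IR (phi0 fd be) (lam fd 0 be)).
  { apply IR_ext with (fun x => x^0 * phi0 fd be x); auto. intros; simpl; ring. }
  destruct (I3_bound fd a' be B J0 J1 J2 J3 HD ltac:(lra) HbeB HJ0 HJ1 HJ2 HJ3) as [I3 [HI3 HI3b]].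
  destruct (phi_lims fd be HD (Hlim be Hgm_be 0%nat ltac:(lia)) (Hlim be Hgm_be 1%nat ltac:(lia)))
    as [Lm0 Lm1].
  destruct (series_formula (phi0 fd be) (phi1 fd be) (phi2 fd be) (phi3 fd be) h (lam fd 0 be) I3 Hhp
     (fun x => phi0_der fd be x HD) (fun x => phi1_der fd be x HD) (fun x => phi2_der fd be x HD)
     (fun x => phi3_cont fd be x HD) IRp0 HI3 Lm0 Lm1) as [Rm [HRm Hser]].
  assert (Hp00 : phi0 fd be 0 = 1).
  { unfold phi0. rewrite Ee_pos by lra. rewrite Hfd0, Hf0 by lra. rewrite Rmult_0_r, Ropp_0, exp_0. ring. }
  assert (Hp10 : phi1 fd be 0 = fd 1%nat 0 - be).
  { unfold phi1. rewrite !Ee_pos by lra. rewrite Hfd0, Hf0 by lra. rewrite Rmult_0_r, Ropp_0, exp_0. ring. }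
  rewrite Hp00, Hp10 in Hser.
  set (V := lam fd 0 be / h + 1 / 2 - 1 - h / 12 * (fd 1%nat 0 - be) - Rm / h) in Hser.
  assert (HserF : is_series (Fterm f s (1 - g / sqrt s)) V).
  { apply (is_series_ext _ _ _ (fun n => eq_sym (Fterm_phi f fd s g n Hfd0 Hs ltac:(rewrite Hgs; lra)))).
    rewrite Hgs. fold h. exact Hser. }
  split. { exists V. exact HserF. }
  rewrite (is_series_unique _ _ HserF).
  assert (HLg : Lap f g = lam fd 0 g) by (apply Lap_lam with a' J0 c; auto; unfold c in *; lra).
  unfold Mfun, Nfun.
  rewrite HLg, (Lap_der1 f fd a' J0 g HD Hfd0 HJ ltac:(lra)), (Lap_der2 f fd a' J0 g HD Hfd0 HJ ltac:(lra)).
  destruct (lam_IR fd a' J0 1 g c HD HJ Hc ltac:(unfold c in *; lra)) as [_ Hl1].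
  destruct (lam_IR fd a' J0 2 g c HD HJ Hc ltac:(unfold c in *; lra)) as [_ Hl2].
  fold L1m in Hl1. fold L2m in Hl2.
  pose proof (lam_T2 fd a' J0 g d c HD HJ Hc ltac:(unfold c in *; split_Rabs; lra)) as HT.
  fold KT in HT.
  set (T := lam fd 0 (g + d) - lam fd 0 g + d * lam fd 1 g - d ^ 2 / 2 * lam fd 2 g) in HT.
  assert (Hlb : lam fd 0 be = T + lam fd 0 g - d * lam fd 1 g + d^2/2 * lam fd 2 g)
    by (unfold T; rewrite Hbe_eq; lra).
  assert (Hsq_h : sqrt s = / h) by (unfold h; rewrite Rinv_inv; auto).
  split.
  - rewrite Hsq_h. unfold V. rewrite Hlb, Hbe_eq.
    replace (lam fd 0 g) with (lam fd 0 g) by reflexivity.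
    rewrite (alg_id h g d (lam fd 0 g) (lam fd 1 g) (lam fd 2 g) T Rm (fd 1%nat 0)) by lra.
    rewrite Rabs_mult, (Rabs_pos_eq h) by lra.
    replace ((Rabs CN + Rabs CD) / / h) with (h * (Rabs CN + Rabs CD)) by (field; lra).
    apply Rmult_le_compat_l. lra.
    apply Rle_trans with CD; [| generalize (Rabs_pos CN) (Rle_abs CD); lra].
    assert (Hh3 : 0 < h^3) by (apply pow_lt; lra).
    apply bracket_bound with (B := B); auto.
    + lra.
    + unfold Rdiv. rewrite Rabs_mult, Rabs_inv, (Rabs_pos_eq h) by lra.
      apply Rle_trans with (Cd * h * / h). apply Rmult_le_compat_r; auto. left; apply Rinv_0_lt_compat; lra.
      right; field; lra.
    + fold eta. unfold Rdiv. rewrite Rabs_mult, Rabs_inv, (Rabs_pos_eq (h^3)) by lra.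
      apply Rle_trans with (Ceta * h^3 * / h^3). apply Rmult_le_compat_r; auto. left; apply Rinv_0_lt_compat; lra.
      right; field; lra.
    + unfold Rdiv. rewrite Rabs_mult, Rabs_inv, (Rabs_pos_eq (h^3)) by lra.
      apply Rle_trans with (Rabs d ^ 3 * KT * / h^3).
      apply Rmult_le_compat_r; auto. left; apply Rinv_0_lt_compat; lra.
      apply Rle_trans with ((Cd * h)^3 * KT * / h^3).
      apply Rmult_le_compat_r. left; apply Rinv_0_lt_compat; lra.
      apply Rmult_le_compat_r; auto. apply pow_incr; split; auto; apply Rabs_pos.
      right; field; lra.
    + unfold Rdiv. rewrite Rabs_mult, Rabs_inv, (Rabs_pos_eq (h^3)) by lra.
      apply Rle_trans with (h^3 * I3 * / h^3).
      apply Rmult_le_compat_r; auto. left; apply Rinv_0_lt_compat; lra.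
      apply Rle_trans with (h^3 * K3 * / h^3).
      apply Rmult_le_compat_r. left; apply Rinv_0_lt_compat; lra.
      apply Rmult_le_compat_l; [lra|unfold K3; lra].
      right; field; lra.
  - apply Rle_trans with CN; [| generalize (Rabs_pos CD) (Rle_abs CN); lra].
    unfold CN.
    assert (E1 : Rabs (/ 3 * g ^ 3 * - lam fd 1 g) <= B^3/3 * L1m).
    { rewrite !Rabs_mult, Rabs_Ropp, <- RPow_abs, (Rabs_pos_eq (/3)) by lra.
      assert (Rabs g ^ 3 <= B^3) by (apply pow_incr; split; auto; apply Rabs_pos).
      assert (0 <= Rabs g ^ 3) by (apply pow_le; apply Rabs_pos).
      assert (0 <= Rabs (lam fd 1 g)) by apply Rabs_pos.
      apply Rle_trans with (/3 * B^3 * L1m). apply Rmult_le_compat; try nra.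
      right; field. }
    assert (E2 : Rabs (/ 8 * g ^ 4 * lam fd 2 g) <= B^4/8 * L2m).
    { rewrite !Rabs_mult, <- RPow_abs, (Rabs_pos_eq (/8)) by lra.
      assert (Rabs g ^ 4 <= B^4) by (apply pow_incr; split; auto; apply Rabs_pos).
      assert (0 <= Rabs g ^ 4) by (apply pow_le; apply Rabs_pos).
      assert (0 <= Rabs (lam fd 2 g)) by apply Rabs_pos.
      apply Rle_trans with (/8 * B^4 * L2m). apply Rmult_le_compat; try nra.
      right; field. }
    assert (E3 : Rabs (/ 12 * (g - fd 1%nat 0)) <= (B + Rabs (fd 1%nat 0)) / 12).
    { rewrite Rabs_mult, (Rabs_pos_eq (/12)) by lra.
      assert (Rabs (g - fd 1%nat 0) <= B + Rabs (fd 1%nat 0))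
        by (eapply Rle_trans; [apply Rabs_triang|rewrite Rabs_Ropp; lra]).
      lra. }
    eapply Rle_trans. apply Rabs_triang. eapply Rle_trans. apply Rplus_le_compat_r. apply Rabs_triang.
    lra.
Qed.

Lemma sqrt_ge k s : 0 <= k -> k^2 <= s -> k <= sqrt s.
Proof. intros Hk Hs. rewrite <- (sqrt_pow2 k Hk). apply sqrt_le_1_alt; auto. Qed.

Lemma inv_sqrt_le h0 s : 0 < h0 -> (/ h0)^2 <= s -> / sqrt s <= h0.
Proof.
  intros Hh Hs.
  assert (H1 : / h0 <= sqrt s) by (apply sqrt_ge; auto; left; apply Rinv_0_lt_compat; auto).
  assert (0 < / h0) by (apply Rinv_0_lt_compat; auto).
  rewrite <- (Rinv_inv h0). apply Rinv_le_contravar; auto.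
Qed.

Theorem theorem4p2 (f : R -> R) (fd : nat -> R -> R)
  (Hnonneg : forall x, 0 <= x -> 0 <= f x)
  (Hnoninc : forall x y, 0 <= x -> x <= y -> f y <= f x)
  (Hf0 : f 0 = 1)
  (Hfd0 : forall x, 0 <= x -> fd 0%nat x = f x)
  (Hder : forall j, (j < 4)%nat -> deriv_on_nonneg (fd j) (fd (S j)))
  (Hcont4 : cont_on_nonneg (fd 4%nat))
  (HL1 : forall g : R, Rbar_lt (gamma_min f) g -> forall j, (j <= 4)%nat ->
     ex_RInt_gen (fun x => Rabs (exp (- (g * x)) * fd j x))
       (at_point 0) (Rbar_locally p_infty))
  (Hlim : forall g : R, Rbar_lt (gamma_min f) g -> forall j, (j <= 4)%nat ->
     is_lim (fun x => exp (- (g * x)) * fd j x) p_infty 0) :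
  (* F_s(rho) = sqrt s L(gamma) + M(gamma) + O(1/sqrt s), uniformly on compacts *)
  (forall a b : R, Rbar_lt (gamma_min f) a -> a <= b ->
     exists C s0, 1 <= s0 /\
       forall s g, s0 <= s -> a <= g <= b -> g <= sqrt s ->
         ex_series (Fterm f s (1 - g / sqrt s)) /\
         Rabs (Series (Fterm f s (1 - g / sqrt s))
               - (sqrt s * Lap f g + Mfun f g)) <= C / sqrt s) /\
  (* the O(1/sqrt s) term is N(gamma)/sqrt s + o(1/sqrt s) *)
  (forall g : R, Rbar_lt (gamma_min f) g ->
     is_lim (fun s => sqrt s * (Series (Fterm f s (1 - g / sqrt s))
                                 - (sqrt s * Lap f g + Mfun f g)))
       p_infty (Nfun f (fd 1%nat 0) g)).
Proof.
  split.
  - intros a b Ha Hab.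
    destruct (main_est f fd Hf0 Hfd0 Hder HL1 Hlim a b Ha Hab) as [C [h0 [Hh0 Hmain]]].
    exists (2 * C), (Rmax 1 ((/ h0)^2)). split; [apply Rmax_l|].
    intros s g Hs Hg _.
    assert (Hs1 : 1 <= s) by (eapply Rle_trans; [apply Rmax_l|exact Hs]).
    assert (Hs2 : (/ h0)^2 <= s) by (eapply Rle_trans; [apply Rmax_r|exact Hs]).
    assert (Hsq : 1 <= sqrt s) by (apply sqrt_ge; lra).
    destruct (Hmain s g ltac:(lra) (inv_sqrt_le h0 s ltac:(lra) Hs2) Hg) as [Hex [Hb HN]].
    split; auto.
    set (X := Series (Fterm f s (1 - g / sqrt s)) - (sqrt s * Lap f g + Mfun f g)) in *.
    set (N := Nfun f (fd 1%nat 0) g) in *.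
    assert (HC : 0 <= C) by (generalize (Rabs_pos N); lra).
    assert (Hi : / sqrt s <= 1).
    { rewrite <- Rinv_1. apply Rinv_le_contravar; lra. }
    assert (HsX : Rabs (sqrt s * X) <= 2 * C).
    { replace (sqrt s * X) with ((sqrt s * X - N) + N) by ring.
      eapply Rle_trans. apply Rabs_triang.
      assert (C / sqrt s <= C).
      { unfold Rdiv. replace C with (C * 1) at 2 by ring. apply Rmult_le_compat_l; auto. }
      lra. }
    rewrite Rabs_mult, (Rabs_pos_eq (sqrt s)) in HsX by lra.
    apply Rmult_le_reg_l with (sqrt s). lra.
    replace (sqrt s * (2 * C / sqrt s)) with (2 * C) by (field; lra). auto.
  - intros g Hg.
    destruct (main_est f fd Hf0 Hfd0 Hder HL1 Hlim g g Hg (Rle_refl g)) as [C [h0 [Hh0 Hmain]]].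
    intros P [eps HP].
    set (K := Rabs C / eps + 1).
    assert (HK : 0 < K) by (unfold K; generalize (Rabs_pos C); generalize (cond_pos eps); intros;
      assert (0 <= Rabs C / eps) by (apply Rdiv_le_0_compat; lra); lra).
    exists (Rmax 1 (Rmax ((/ h0)^2) (K^2))). intros s Hs.
    assert (Hs1 : 1 <= s) by (eapply Rle_trans; [apply Rmax_l|left; exact Hs]).
    assert (Hs2 : (/ h0)^2 <= s) by (eapply Rle_trans; [|left; exact Hs];
      eapply Rle_trans; [apply Rmax_l|apply Rmax_r]).
    assert (Hs3 : K^2 <= s) by (eapply Rle_trans; [|left; exact Hs];
      eapply Rle_trans; [apply Rmax_r|apply Rmax_r]).
    assert (HsK : K <= sqrt s) by (apply sqrt_ge; lra).
    assert (Hsq : 1 <= sqrt s) by (apply sqrt_ge; lra).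
    destruct (Hmain s g ltac:(lra) (inv_sqrt_le h0 s ltac:(lra) Hs2) (conj (Rle_refl g) (Rle_refl g)))
      as [_ [Hb _]].
    apply HP. unfold ball; simpl; unfold AbsRing_ball, abs, minus, plus, opp; simpl.
    eapply Rle_lt_trans. exact Hb.
    assert (Heps := cond_pos eps).
    apply Rle_lt_trans with (Rabs C / sqrt s).
    { unfold Rdiv. apply Rmult_le_compat_r. left; apply Rinv_0_lt_compat; lra. apply Rle_abs. }
    apply Rmult_lt_reg_l with (sqrt s). lra.
    replace (sqrt s * (Rabs C / sqrt s)) with (Rabs C) by (field; lra).
    apply Rle_lt_trans with (K * eps - eps).
    + unfold K. right. field. lra.
    + nra.
Qed.
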